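(* Let $\mathcal{N}$ be a Cassou-Nogu\`es ideal with $N=\#(\mathcal{O}/\mathcal{N})$, and let $U=\{u_1,\dots,u_r\}\subset\mathcal{O}$ be nonempty with each $u_j$ prime to $\mathcal{N}$. Then for every $x\in\mathcal{O}/\mathcal{N}$ and all integers $l_1,\dots,l_r\ge0$, $$\mathfrak{h}_U\Big(x+\sum_{j=1}^r l_ju_j\Big)=\mathfrak{h}_U(x)+\sum_{\emptyset\neq S\subseteq\{1,\dots,r\}}\ \sum_{\substack{0\le d_j<l_j\\ j\in S}}\mathfrak{h}_{U\setminus\{u_j\}_{j\in S}}\Big(x+\sum_{j\in S}d_ju_j\Big).$$
   Context: $F$ is a number field with ring of integers $\mathcal{O}$. A Cassou-Nogu\`es ideal is an integral ideal $\mathcal{N}\neq\mathcal{O}$ such that $\mathcal{O}/\mathcal{N}$ is cyclic as an additive group, i.e. $\mathcal{O}/\mathcal{N}\simeq\mathbf{Z}/N$ with $N=\#(\mathcal{O}/\mathcal{N})$. An element $u\in\mathcal{O}$ is prime to $\mathcal{N}$ if it is a unit modulo $\mathcal{N}$. For a nonempty $U=\{u_1,\dots,u_r\}\subset\mathcal{O}$, $\mathfrak{h}_U$ is the function on $\mathcal{O}/\mathcal{N}$ given by $\mathfrak{h}_U(a)=\frac{1}{N^{r-1}}\sum_{0\le d_1,\dots,d_r<N,\ d_1u_1+\dots+d_ru_r\equiv-a\bmod\mathcal{N}}d_1d_2\cdots d_r-\left(\frac{N-1}{2}\right)^r$, and $\mathfrak{h}_\emptyset(a)=N-1$ if $a\equiv0\bmod\mathcal{N}$,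 $\mathfrak{h}_\emptyset(a)=-1$ otherwise. *)

(* Defs.v *)
From HB Require Import structures.
From mathcomp Require Import all_boot all_order all_algebra.
Set Implicit Arguments. Unset Strict Implicit. Unset Printing Implicit Defensive.
Import Order.TTheory GRing.Theory Num.Theory.
Local Open Scope ring_scope.

(* The quotient O/N is modelled as a finite commutative ring A together with a
   surjective ring morphism pi : O -> A (the reduction map).  *)

Definition additively_cyclic (A : finComUnitRingType) : Prop :=
  exists g : A, forall a : A, exists k : nat, a = g *+ k.

(* h_I(a) for the subfamily (u_j)_{j in I} of u : 'I_r -> O, with N = #|A|. *)
Definition frak_h (O : comNzRingType) (A : finComUnitRingType)
  (pi : {rmorphism O -> A}) (r : nat) (u : 'I_r -> O) (I : {set 'I_r}) (a : A) : rat :=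
  let N := #|A| in
  if I == set0 then (if a == 0 then (N%:R - 1) else -1)
  else
    (N%:R ^+ (#|I|.-1))^-1 *
      (\sum_(d : {ffun 'I_r -> 'I_N} |
               [forall j, (j \notin I) ==> (val (d j) == 0%N)] &&
               (\sum_(j in I) pi (u j) *+ val (d j) == - a))
          (\prod_(j in I) (val (d j))%:R))
    - ((N%:R - 1) / 2) ^+ #|I|.

(* Main.v *)
Set Warnings "-notation-overridden,-ambiguous-paths,-notation-incompatible-prefix".
Require Import Defs.
From HB Require Import structures.
From mathcomp Require Import all_boot all_order all_algebra all_fingroup all_solvable.
From mathcomp Require Import ring.
Import Order.TTheory GRing.Theory Num.Theory FinRing.Theory.
Local Open Scope ring_scope.
Set Implicit Arguments. Unset Strict Implicit. Unset Printing Implicit Defensive.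

Section Gen.
Variable r : nat.

Definition upd M (d : {ffun 'I_r -> 'I_M}) (k : 'I_r) (e : 'I_M) : {ffun 'I_r -> 'I_M} :=
  [ffun j => if j == k then e else d j].

Lemma sum_split_k (V : nmodType) M k (F : {ffun 'I_r -> 'I_M} -> V) :
  \sum_d F d = \sum_(d : {ffun 'I_r -> 'I_M} | val (d k) == 0%N) \sum_(e : 'I_M) F (upd d k e).
Proof.
rewrite exchange_big /= (partition_big (fun d : {ffun 'I_r -> 'I_M} => d k) predT) //=.
apply: eq_bigr => e _.
pose z : 'I_M := Ordinal (leq_ltn_trans (leq0n e) (ltn_ord e)).
rewrite (reindex_onto (fun d => upd d k e) (fun d => upd d k z)) /=.
  apply: eq_bigl => d.
  rewrite /upd !ffunE !eqxx andTb.
  apply/eqP/eqP => [<-|dk0]; first by rewrite ffunE eqxx.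
  apply/ffunP => j; rewrite !ffunE; case: eqP => [->|//]. by apply: val_inj.
move=> d /eqP dk; apply/ffunP => j; rewrite /upd !ffunE; case: eqP => [->|//].
by rewrite dk.
Qed.

Lemma sum_zero M (hM : (0 < M)%N) (Q : pred {ffun 'I_r -> 'I_M}) (V : nmodType) (F : _ -> V) :
  (forall d, Q d = [forall j, val (d j) == 0%N]) ->
  \sum_(d | Q d) F d = F [ffun=> Ordinal hM].
Proof.
move=> HQ; rewrite (big_pred1 [ffun=> Ordinal hM]) // => d.
rewrite HQ; apply/forallP/eqP => [H|->]; last by move=> j; rewrite ffunE.
by apply/ffunP => j; rewrite ffunE; apply: val_inj; apply/eqP.
Qed.

Lemma sum_ord_nat n : \sum_(e < n) ((val e)%:R : rat) = n%:R * (n%:R - 1) / 2.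
Proof.
elim: n => [|n IH]; first by rewrite big_ord0; field.
by rewrite big_ord_recr /= IH -natr1; field.
Qed.

End Gen.

Section Ring.
Variable A : finComUnitRingType.
Hypothesis A_cyc : additively_cyclic A.
Local Notation N := #|A|.

Lemma F1 (y : A) : y *+ N = 0.
Proof. rewrite -zmodXgE -cardsT. exact: (expg_cardG (in_setT y)). Qed.

Lemma N_gt0 : (0 < N)%N.
Proof. by apply/card_gt0P; exists 0. Qed.

Lemma cover c : (0 < c)%N -> (1 : A) *+ c = 0 -> (N <= c)%N.
Proof.
move=> c0 h1; have [g Hg] := A_cyc.
have gc : g *+ c = 0 by rewrite -mulr_natr -(mulr1n 1) -/(1 *+ c) h1 mulr0.
have : (N <= #|codom (fun i : 'I_c => g *+ i)|)%N.
  apply: subset_leq_card; apply/subsetP => y _.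
  have [m ->] := Hg y.
  have -> : g *+ m = g *+ (Ordinal (ltn_pmod m c0)).
    rewrite /= {1}(divn_eq m c) mulrnDr mulnC mulrnA gc mul0rn add0r //.
  exact: codom_f.
move/leq_trans; apply; apply: leq_trans (card_size _) _.
by rewrite size_codom card_ord.
Qed.

Lemma inj_mul (v : A) : v \is a GRing.unit -> injective (fun e : 'I_N => v *+ e).
Proof.
move=> vu.
suff H : forall a b : 'I_N, (a < b)%N -> v *+ a = v *+ b -> False.
  move=> a b /= eab; apply/eqP; apply: contraT => nab.
  case: (ltngtP a b) => [ab|ba|abe]; last by move: nab; rewrite (val_inj abe) eqxx.
  - by case: (H a b ab eab).
  - by case: (H b a ba (esym eab)).
move=> a b ab eab.
have e0 : v *+ (b - a) = 0.
  have hb : v *+ b = v *+ a + v *+ (b - a).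
    by rewrite -mulrnDr subnKC // ltnW.
  have : v *+ a + v *+ (b - a) = v *+ a + 0 by rewrite -hb addr0 eab.
  by move/addrI.
have e1 : (1 : A) *+ (b - a) = 0.
  by apply: (mulrI vu); rewrite mulr0 mulr_natr e0.
have := cover _ e1; rewrite subn_gt0 ab => /(_ isT) => Hle.
have : (b - a < N)%N by apply: leq_ltn_trans (leq_subr _ _) (ltn_ord b).
by rewrite ltnNge Hle.
Qed.

Lemma surj_mul (v : A) : v \is a GRing.unit -> forall c, exists e : 'I_N, v *+ e = c.
Proof.
move=> vu c; have := inj_card_onto (inj_mul vu) (eq_leq (esym (card_ord N))) c.
by case/codomP => e ->; exists e.
Qed.

Definition Ef (v c : A) : rat := \sum_(e : 'I_N | v *+ e == c) (val e)%:R.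

Lemma Ef_val v c (e0 : 'I_N) : v \is a GRing.unit -> v *+ e0 = c -> Ef v c = (val e0)%:R.
Proof.
move=> vu h; rewrite /Ef (big_pred1 e0) // => e /=.
apply/eqP/eqP => [he|->//]; apply: (inj_mul vu); by rewrite /= he.
Qed.

Lemma Ef_shift v c : v \is a GRing.unit ->
  Ef v (c - v) = Ef v c - 1 + N%:R * (c == 0)%:R.
Proof.
move=> vu; have [e0 he0] := surj_mul vu c.
rewrite (Ef_val vu he0).
case: (posnP e0) => [e00|e0p].
  have c0 : c = 0 by rewrite -he0 e00.
  have hN : (N.-1 < N)%N by rewrite prednK ?N_gt0.
  rewrite (@Ef_val _ _ (Ordinal hN)) // /=; last first.
    by apply/eqP; rewrite c0 sub0r -subr_eq0 opprK -mulrSr prednK ?N_gt0 // F1.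
  rewrite c0 eqxx e00 -natr1 ?prednK ?N_gt0 //.
  by rewrite -subn1 natrB ?N_gt0 //; ring.
have hN : (e0.-1 < N)%N by apply: leq_ltn_trans (leq_pred _) (ltn_ord e0).
rewrite (@Ef_val _ _ (Ordinal hN)) // /=; last first.
  by rewrite -he0 -[in RHS](prednK e0p) mulrSr addrK.
have -> : (c == 0) = false.
  apply/negbTE/eqP => c0.
  have : v *+ e0 = v *+ (Ordinal N_gt0) by rewrite he0 c0.
  by move/(inj_mul vu)/(congr1 val) => /= e00; rewrite e00 in e0p.
by rewrite -subn1 natrB // mulr0 addr0.
Qed.

End Ring.

Section Main.
Variables (O : comNzRingType) (A : finComUnitRingType) (pi : {rmorphism O -> A}).
Hypothesis A_cyc : additively_cyclic A.
Variables (r : nat) (u : 'I_r -> O).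
Hypothesis u_unit : forall j, pi (u j) \is a GRing.unit.
Local Notation N := #|A|.
Local Notation D := {ffun 'I_r -> 'I_N}.

Definition supp (I : {set 'I_r}) (d : D) := [forall j, (j \notin I) ==> (val (d j) == 0%N)].
Definition sm (I : {set 'I_r}) (d : D) : A := \sum_(j in I) pi (u j) *+ val (d j).
Definition pr (I : {set 'I_r}) (d : D) : rat := \prod_(j in I) ((val (d j))%:R : rat).
Definition Sf I (a : A) := \sum_(d : D | supp I d && (sm I d == - a)) pr I d.
Definition Tf I := \sum_(d : D | supp I d) pr I d.

Lemma frak_hE (I : {set 'I_r}) (a : A) : frak_h pi u I a =
  if I == set0 then (if a == 0 then N%:R - 1 else -1)
  else (N%:R ^+ #|I|.-1)^-1 * Sf I a - ((N%:R - 1) / 2) ^+ #|I|.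
Proof. by []. Qed.

Lemma supp_upd (I : {set 'I_r}) k (d : D) (e : 'I_N) : k \in I -> val (d k) == 0%N ->
  supp I (upd d k e) = supp (I :\ k) d.
Proof.
move=> kI dk; apply/forallP/forallP => H j; have := H j; rewrite !inE /upd ffunE;
  case: (eqVneq j k) => [->|ne] //=; by rewrite kI.
Qed.

Lemma supp_k (J : {set 'I_r}) k (d : D) : k \notin J -> supp J d -> val (d k) == 0%N.
Proof. by move=> kJ /forallP /(_ k); rewrite kJ. Qed.

Lemma pr_upd (I : {set 'I_r}) k (d : D) (e : 'I_N) : k \in I -> pr I (upd d k e) = (val e)%:R * pr (I :\ k) d.
Proof.
move=> kI; rewrite /pr (big_setD1 k kI) /upd ffunE eqxx; congr (_ * _).
by apply: eq_bigr => j; rewrite !inE ffunE => /andP [/negbTE -> _].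
Qed.

Lemma sm_upd (I : {set 'I_r}) k (d : D) (e : 'I_N) : k \in I -> sm I (upd d k e) = pi (u k) *+ val e + sm (I :\ k) d.
Proof.
move=> kI; rewrite /sm (big_setD1 k kI) /upd ffunE eqxx; congr (_ + _).
by apply: eq_bigr => j; rewrite !inE ffunE => /andP [/negbTE -> _].
Qed.

Lemma Tf_eq (I : {set 'I_r}) : Tf I = (N%:R * (N%:R - 1) / 2) ^+ #|I|.
Proof.
move hI: #|I| => n; elim: n I hI => [|n IH] I hI.
  have -> : I = set0 by apply/eqP; rewrite -cards_eq0 hI.
  rewrite expr0 /Tf (sum_zero (N_gt0 A)) => [|d]; first by rewrite /pr big_set0.
  by rewrite /supp; apply: eq_forallb => j; rewrite inE.
have [k kI] : exists k, k \in I by apply/set0Pn; rewrite -card_gt0 hI.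
have hJ : #|I :\ k| = n by move: hI; rewrite (cardsD1 k) kI => [[]].
rewrite exprS -(IH (I :\ k)) // /Tf big_mkcond (sum_split_k k) /= big_distrr /=.
rewrite [LHS]big_mkcond [RHS]big_mkcond /=; apply: eq_bigr => d _.
case: (boolP (val (d k) == 0%N)) => dk; last first.
  case: ifP => // sJ.
  by move: dk; rewrite (supp_k (k := k) (d := d) _ sJ) // !inE eqxx.
under eq_bigr => e _ do rewrite supp_upd // pr_upd //.
case: (supp _ d); last by rewrite big1.
by rewrite -big_distrl /= sum_ord_nat.
Qed.

Lemma Sf_dec (I : {set 'I_r}) k (a : A) : k \in I -> Sf I a =
  \sum_(d : D | supp (I :\ k) d) Ef (pi (u k)) (- a - sm (I :\ k) d) * pr (I :\ k) d.
Proof.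
move=> kI; rewrite /Sf big_mkcond (sum_split_k k) /=.
rewrite [LHS]big_mkcond [RHS]big_mkcond /=; apply: eq_bigr => d _.
case: (boolP (val (d k) == 0%N)) => dk; last first.
  case: ifP => // sJ.
  by move: dk; rewrite (supp_k (k := k) (d := d) _ sJ) // !inE eqxx.
under eq_bigr => e _ do rewrite supp_upd // pr_upd // sm_upd //.
case: (supp _ d); last by rewrite big1.
rewrite /Ef big_distrl /= [RHS]big_mkcond /=; apply: eq_bigr => e _ /=.
have -> : (pi (u k) *+ val e + sm (I :\ k) d == - a) = (pi (u k) *+ val e == - a - sm (I :\ k) d).
  by apply/eqP/eqP => h; [rewrite -h addrK | rewrite h subrK].
by case: eqP.
Qed.


Lemma Sf0 (a : A) : Sf set0 a = (a == 0)%:R.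
Proof.
rewrite /Sf.
rewrite (eq_bigl (fun d : D => supp set0 d && (a == 0))); last first.
  by move=> d; rewrite /sm big_set0 eq_sym oppr_eq0.
case: (a == 0).
  have := Tf_eq set0; rewrite cards0 expr0 /Tf => <-.
  by apply: eq_bigl => d; rewrite andbT.
by rewrite big_pred0 // => d; rewrite andbF.
Qed.

Lemma step (I : {set 'I_r}) k (a : A) : k \in I ->
  frak_h pi u I (a + pi (u k)) = frak_h pi u I a + frak_h pi u (I :\ k) a.
Proof.
move=> kI; set J := I :\ k; set v := pi (u k).
have I0 : (I == set0) = false by apply/negbTE/set0Pn; exists k.
have cI : #|I| = #|J|.+1 by rewrite (cardsD1 k I) kI.
have key : Sf I (a + v) = Sf I a - Tf J + N%:R * Sf J a.
  rewrite !(Sf_dec _ kI) -/J -/v.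
  have -> : \sum_(d : D | supp J d) Ef v (- (a + v) - sm J d) * pr J d =
     \sum_(d : D | supp J d) (Ef v (- a - sm J d) - 1 + N%:R * ((- a - sm J d) == 0)%:R) * pr J d.
    apply: eq_bigr => d _.
    have -> : - (a + v) - sm J d = - a - sm J d - v by rewrite opprD; ring.
    by rewrite Ef_shift // u_unit.
  rewrite /Tf /Sf big_mkcondr mulr_sumr -sumrB -big_split /=; apply: eq_bigr => d _.
  rewrite subr_eq0 eq_sym; case: eqP => _ /=; ring.
rewrite !frak_hE I0 cI /=.
case: (eqVneq J set0) => [J0|J0].
  rewrite key J0 Sf0 Tf_eq cards0 /= expr0 invr1 !mul1r expr1.
  by case: (a == 0); rewrite /=; ring.
have [m cJ] : exists m, #|J| = m.+1.
  by exists #|J|.-1; rewrite prednK // card_gt0.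
rewrite key Tf_eq cJ /=.
have N0 : (N%:R : rat) != 0 by rewrite pnatr_eq0 -lt0n N_gt0.
have X0 : (N%:R : rat) ^+ m != 0 by rewrite expf_neq0.
rewrite !exprS !exprMn.
field.
by rewrite X0 N0.
Qed.

Lemma tele (I : {set 'I_r}) k (y : A) l : k \in I ->
  frak_h pi u I (y + pi (u k) *+ l) =
  frak_h pi u I y + \sum_(e < l) frak_h pi u (I :\ k) (y + pi (u k) *+ e).
Proof.
move=> kI; elim: l => [|l IH]; first by rewrite big_ord0 mulr0n !addr0.
by rewrite big_ord_recr /= mulrSr addrA step // IH addrA.
Qed.
End Main.

Lemma setU1D1 (T : finType) (k : T) (S : {set T}) : ((k |: S) :\ k == S) = (k \notin S).
Proof.
apply/eqP/idP => [<-|kS]; first by rewrite !inE eqxx.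
exact: setU1K.
Qed.

Section Final.
Variables (O : comNzRingType) (A : finComUnitRingType) (pi : {rmorphism O -> A}).
Hypothesis A_cyc : additively_cyclic A.
Variables (r : nat) (u : 'I_r -> O).
Hypothesis u_unit : forall j, pi (u j) \is a GRing.unit.
Variables (l : 'I_r -> nat) (M : nat).
Hypothesis hM : (0 < M)%N.
Hypothesis hl : forall j, (l j <= M)%N.
Local Notation DM := {ffun 'I_r -> 'I_M}.

Definition Pd (S : {set 'I_r}) (d : DM) :=
  [forall j, if j \in S then (val (d j) < l j)%N else (val (d j) == 0%N)].
Definition Gd (S : {set 'I_r}) (d : DM) (x : A) :=
  frak_h pi u (~: S) (x + \sum_(j in S) pi (u j) *+ val (d j)).

Lemma P_upd (S : {set 'I_r}) k (d : DM) (e : 'I_M) : k \notin S -> val (d k) == 0%N ->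
  Pd (k |: S) (upd d k e) = (val e < l k)%N && Pd S d.
Proof.
move=> kS dk; apply/forallP/andP => [H|[el /forallP PS] j].
  split; first by have := H k; rewrite setU11 ffunE eqxx.
  apply/forallP => j; have := H j; rewrite !inE ffunE.
  case: (eqVneq j k) => [->|ne] /= h; first by rewrite (negbTE kS).
  exact: h.
rewrite !inE ffunE; case: (eqVneq j k) => [->|ne] //=.
Qed.

Lemma G_upd (S : {set 'I_r}) k (d : DM) (e : 'I_M) (x : A) : k \notin S ->
  Gd (k |: S) (upd d k e) x =
  frak_h pi u (~: S :\ k) (x + \sum_(j in S) pi (u j) *+ val (d j) + pi (u k) *+ val e).
Proof.
move=> kS; rewrite /Gd.
have -> : ~: (k |: S) = ~: S :\ k by apply/setP => j; rewrite !inE negb_or andbC.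
rewrite big_setU1 //= ffunE eqxx.
have -> : \sum_(j in S) pi (u j) *+ val (upd d k e j) = \sum_(j in S) pi (u j) *+ val (d j).
  apply: eq_bigr => j jS; rewrite ffunE; case: eqP => // jk.
  by move: kS; rewrite -jk jS.
by rewrite addrA addrAC.
Qed.

Lemma reind_S (K : {set 'I_r}) k (F : {set 'I_r} -> rat) : k \in K ->
  \sum_(S : {set 'I_r} | (S \subset K) && (k \in S)) F S =
  \sum_(S : {set 'I_r} | S \subset K :\ k) F (k |: S).
Proof.
move=> kK.
rewrite (reindex_onto (fun S => k |: S) (fun S => S :\ k)) /=; last first.
  by move=> S /andP [_ kS]; rewrite setD1K.
apply: eq_bigl => S; rewrite setU1D1 setU11 andbT subUset sub1set kK /=.
by rewrite subsetD1.
Qed.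

Lemma claim n : forall (K : {set 'I_r}), #|K| = n -> forall x : A,
  frak_h pi u setT (x + \sum_(j in K) pi (u j) *+ l j) =
  \sum_(S : {set 'I_r} | S \subset K) \sum_(d : DM | Pd S d) Gd S d x.
Proof.
elim: n => [|n IH] K hK x.
  have -> : K = set0 by apply/eqP; rewrite -cards_eq0 hK.
  rewrite big_set0 addr0 (big_pred1 set0); last by move=> S; rewrite subset0.
  rewrite (sum_zero hM) => [|d]; last by apply: eq_forallb => j; rewrite inE.
  by rewrite /Gd setC0 big_set0 addr0.
have [k kK] : exists k, k \in K by apply/set0Pn; rewrite -card_gt0 hK.
have hK' : #|K :\ k| = n by move: hK; rewrite (cardsD1 k) kK => [[]].
rewrite (big_setD1 k kK) /= addrA IH //.
rewrite [RHS](bigID (fun S : {set 'I_r} => k \in S)) /= [RHS]addrC reind_S //.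
rewrite [X in _ = X + _](eq_bigl (fun S : {set 'I_r} => S \subset K :\ k)); last by move=> S; rewrite subsetD1.
rewrite -big_split /=; apply: eq_bigr => S SK.
have kS : k \notin S by apply: contraTN SK => kS; rewrite subsetD1 kS andbF.
have kCS : k \in ~: S by rewrite inE.
have -> : \sum_(d : DM | Pd S d) Gd S d (x + pi (u k) *+ l k) =
   \sum_(d : DM | Pd S d) Gd S d x + \sum_(d : DM | Pd S d) \sum_(e < l k)
      frak_h pi u (~: S :\ k) (x + \sum_(j in S) pi (u j) *+ val (d j) + pi (u k) *+ e).
  rewrite -big_split; apply: eq_bigr => d _.
  by rewrite /Gd addrAC (tele A_cyc u_unit _ _ kCS).
congr (_ + _).
rewrite [RHS]big_mkcond (sum_split_k k) /= [RHS]big_mkcond [LHS]big_mkcond /=.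
apply: eq_bigr => d _.
case: (boolP (val (d k) == 0%N)) => dk; last first.
  case: ifP => // PS; move: dk.
  by have := forallP PS k; rewrite (negbTE kS) => ->.
case PS: (Pd S d); last first.
  by rewrite big1 // => e _; rewrite P_upd // PS andbF.
rewrite (big_ord_widen _ (fun e : nat => frak_h pi u (~: S :\ k) (x + \sum_(j in S) pi (u j) *+ val (d j) + pi (u k) *+ e)) (hl k)).
rewrite big_mkcond /=; apply: eq_bigr => e _.
rewrite P_upd // PS andbT; case: ifP => // _.
by rewrite G_upd.
Qed.

End Final.

Theorem corollary2p2 (O : comNzRingType) (A : finComUnitRingType)
  (pi : {rmorphism O -> A})
  (pi_surj : forall a : A, exists y : O, pi y = a)
  (A_cyc : additively_cyclic A)
  (r : nat) (r_pos : (0 < r)%N) (u : 'I_r -> O) (u_inj : injective u)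
  (u_unit : forall j, pi (u j) \is a GRing.unit)
  (x : A) (l : 'I_r -> nat) :
  frak_h pi u [set: 'I_r] (x + \sum_(j < r) pi (u j) *+ l j) =
  frak_h pi u [set: 'I_r] x +
  \sum_(S : {set 'I_r} | S != set0)
    \sum_(d : {ffun 'I_r -> 'I_(\sum_(j < r) l j)%N} |
            [forall j, if j \in S then (val (d j) < l j)%N else (val (d j) == 0%N)])
      frak_h pi u (~: S) (x + \sum_(j in S) pi (u j) *+ val (d j)).
Proof.
have hl : forall j, (l j <= \sum_(j < r) l j)%N.
  by move=> j; rewrite (bigD1 j) //= leq_addr.
case: (posnP (\sum_(j < r) l j)) => [M0|Mpos].
  have l0 : forall j, l j = 0%N by move=> j; apply/eqP; rewrite -leqn0 -M0 hl.
  rewrite big1 ?addr0; last by move=> j _; rewrite l0.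
  rewrite big1 ?addr0 // => S S0.
  rewrite big_pred0 // => d.
  have [j jS] := set0Pn _ S0; apply/negbTE/negP => /forallP /(_ j).
  by rewrite jS l0.
have := claim A_cyc u_unit Mpos hl (erefl #|[set: 'I_r]|) x.
have hT : \sum_(j in [set: 'I_r]) pi (u j) *+ l j = \sum_(j < r) pi (u j) *+ l j.
  by apply: eq_bigl => j; rewrite inE.
rewrite hT => ->.
rewrite (bigD1 set0) ?sub0set //=; congr (_ + _).
  rewrite (sum_zero Mpos) => [|d]; last by apply: eq_forallb => j; rewrite inE.
  by rewrite /Gd setC0 big_set0 addr0.
by apply: eq_bigl => S; rewrite subsetT.
Qed.
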